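(* Let $G$ be a topological groupoid such that $G^{(0)}$ is locally compact. Consider the assertions: (i) $G$ is proper; (ii) $(r,s)\colon G\to G^{(0)}\times G^{(0)}$ is closed and $G_x^x$ is quasi-compact for every $x\in G^{(0)}$; (iii) for all quasi-compact subspaces $K,L$ of $G^{(0)}$, $G_K^L$ is quasi-compact; (iii)' for all compact subspaces $K,L$ of $G^{(0)}$, $G_K^L$ is quasi-compact; (iv) for every quasi-compact subspace $K$ of $G^{(0)}$, $G_K^K$ is quasi-compact; (v) for all $x,y\in G^{(0)}$ there exist compact neighbourhoods $K_x$ of $x$ and $L_y$ of $y$ such that $G_{K_x}^{L_y}$ is quasi-compact. Then (i)$\iff$(ii)$\iff$(iii)$\iff$(iii)'$\iff$(v)$\implies$(iv). If $G^{(0)}$ is Hausdorff, then (i)–(v) are all equivalent.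
   Context: Quasi-compact: every open cover has a finite subcover; compact: quasi-compact and Hausdorff; locally compact: every point has a compact neighbourhood (not necessarily Hausdorff). A continuous map is proper if it is closed and has quasi-compact fibres. $G$ is proper if $(r,s)\colon G\to G^{(0)}\times G^{(0)}$ is proper. $G_K^L=r^{-1}(L)\cap s^{-1}(K)$, $G_x^x=G_{\{x\}}^{\{x\}}$. *)

(* Defs.v *)
From HB Require Import structures.
From mathcomp Require Import all_boot.
From mathcomp Require Import all_classical.
From mathcomp Require Import topology.
Set Implicit Arguments. Unset Strict Implicit. Unset Printing Implicit Defensive.
Local Open Scope classical_set_scope.

(* The unit
   map u : X -> G is continuous with continuous retraction r, hence X is
   homeomorphic to the subspace u(X) = G^(0) of G. Multiplication is
   a total function that is only meaningful on composable pairs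
   (s g = r h, product g h), continuous on G^(2) with the subspace topology. *)
Record topgroupoid (G X : topologicalType) := TopGroupoid {
  rg : G -> X;
  sg : G -> X;
  ug : X -> G;
  mulg : G -> G -> G;
  invg : G -> G;
  rg_u : forall x, rg (ug x) = x;
  sg_u : forall x, sg (ug x) = x;
  rg_mul : forall g h, sg g = rg h -> rg (mulg g h) = rg g;
  sg_mul : forall g h, sg g = rg h -> sg (mulg g h) = sg h;
  mulgA : forall g h k, sg g = rg h -> sg h = rg k ->
            mulg g (mulg h k) = mulg (mulg g h) k;
  mul_ul : forall g, mulg (ug (rg g)) g = g;
  mul_ur : forall g, mulg g (ug (sg g)) = g;
  rg_inv : forall g, rg (invg g) = sg g;
  sg_inv : forall g, sg (invg g) = rg g;
  mul_invr : forall g, mulg g (invg g) = ug (rg g);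
  mul_invl : forall g, mulg (invg g) g = ug (sg g);
  rg_cont : continuous rg;
  sg_cont : continuous sg;
  ug_cont : continuous ug;
  invg_cont : continuous invg;
  mulg_cont : {within [set p : G * G | sg p.1 = rg p.2],
                 continuous (fun p : G * G => mulg p.1 p.2)}
}.

Definition is_closed_map (T U : topologicalType) (f : T -> U) :=
  forall C : set T, closed C -> closed (f @` C).

(* proper map: closed with quasi-compact fibres ("compact" in
   mathcomp-analysis is quasi-compactness, no separation assumed) *)
Definition is_proper_map (T U : topologicalType) (f : T -> U) :=
  is_closed_map f /\ forall y : U, compact (f @^-1` [set y]).

Definition hausdorff_in (T : topologicalType) (A : set T) :=
  forall x y, A x -> A y -> x <> y ->
    exists U V : set T, [/\ open U, open V, U x, V y & U `&` V `&` A = set0].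

(* compact subspace = quasi-compact and Hausdorff *)
Definition compact_hd (T : topologicalType) (A : set T) :=
  compact A /\ hausdorff_in A.

Definition loc_compact_space (T : topologicalType) :=
  forall x : T, exists K : set T, nbhs x K /\ compact_hd K.

Definition rs_map (G X : topologicalType) (Gp : topgroupoid G X) :=
  fun g : G => (rg Gp g, sg Gp g).

Definition proper_groupoid (G X : topologicalType) (Gp : topgroupoid G X) :=
  is_proper_map (rs_map Gp).

Definition GKL (G X : topologicalType) (Gp : topgroupoid G X) (K L : set X) :=
  rg Gp @^-1` L `&` sg Gp @^-1` K.

(* Main.v *)
From Pilot Require Import Defs.
From mathcomp Require Import all_boot all_classical topology.
Local Open Scope classical_set_scope.
Set Implicit Arguments.

Lemma hd_closure (T : topologicalType) (N Q : set T) z :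
  hausdorff_in N -> compact Q -> Q `<=` N -> N z -> closure Q z -> Q z.
Proof.
move=> hN cQ QN Nz clz.
have PF : ProperFilter (within Q (nbhs z)) by apply: within_nbhs_proper.
have [|a [Qa cla]] := cQ _ PF.
  exact: withinT.
have [<-//|naz] := pselect (a = z).
exfalso.
have [U [V [oU oV Ua Vz UV]]] := hN a z (QN _ Qa) Nz naz.
have FV : within Q (nbhs z) (V `&` Q).
  rewrite /within; apply: filterS (open_nbhs_nbhs (conj oV Vz)) => x Vx Qx; by split.
have [p [[Vp Qp] Up]] := cla _ _ FV (open_nbhs_nbhs (conj oU Ua)).
have : (U `&` V `&` N) p by split; [split|apply: QN].
by rewrite UV.
Qed.

Lemma proper_preimage (T U : topologicalType) (f : T -> U) (K : set U) :
  is_proper_map f -> compact K -> compact (f @^-1` K).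
Proof.
move=> [fcl ffib] cK F PF FK.
have [y [Ky cly]] := cK (f @ F) _ FK.
set C := f @^-1` [set y].
have meet : forall B, F B -> (C `&` closure B) !=set0.
  move=> B FB.
  have : closure (f @` closure B) y.
    move=> W nW.
    have FfB : F (f @^-1` (f @` closure B)).
      by apply: filterS FB => x Bx; exists x => //; apply: subset_closure.
    have [u [[x clx <-] Wu]] := cly _ _ FfB nW.
    by exists (f x); split => //; exists x.
  move=> /(fcl _ (@closed_closure _ B)) [x clx fx]. by exists x.
set H := filter_from F (fun B => C `&` closure B).
have PH : ProperFilter H.
  apply: filter_from_proper; last by move=> B /meet.
  apply: filter_from_filter; first by exists setT; apply: filterT.
  move=> B1 B2 F1 F2; exists (B1 `&` B2); first exact: filterI.
  by move=> x [Cx clx]; split; split => //; apply: (closureS _ clx) => ? [].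
have HC : H C by exists setT; [apply: filterT | move=> ? []].
have [x [Cx clx]] := ffib y H PH HC.
exists x; split; first by rewrite /= Cx.
move=> A B FA nB.
move: nB; rewrite nbhsE => -[W [oW Wx] WB].
have HA : H (C `&` closure A) by exists A.
have [p [[Cp clp] Wp]] := clx _ W HA (open_nbhs_nbhs (conj oW Wx)).
have [q [Aq Wq]] := clp W (open_nbhs_nbhs (conj oW Wp)).
by exists q; split => //; apply: WB.
Qed.

Lemma openX' (A B : topologicalType) (U : set A) (V : set B) :
  open U -> open V -> open (U `*` V).
Proof.
move=> oU oV; rewrite openE => -[a b] [/= Ua Vb]; exists (U, V) => //.
by split; apply: open_nbhs_nbhs; split.
Qed.

Lemma hd_prod (A B : topologicalType) (P : set A) (Q : set B) :
  hausdorff_in P -> hausdorff_in Q -> hausdorff_in (P `*` Q).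
Proof.
move=> hA hB [a b] [a' b'] [/= Aa Bb] [/= Aa' Bb'] neq.
have [e|na] := pselect (a = a').
  have nb : b <> b' by move=> eb; apply: neq; rewrite e eb.
  have [U [V [oU oV Ub Vb' UV]]] := hB b b' Bb Bb' nb.
  exists (setT `*` U), (setT `*` V); split => //; try by apply: openX' => //; exact: openT.
  apply/seteqP; split => // -[p q] [[[_ Uq] [_ Vq]] [_ Bq]].
  have : (U `&` V `&` Q) q by [].
  by rewrite UV.
have [U [V [oU oV Ua Va' UV]]] := hA a a' Aa Aa' na.
exists (U `*` setT), (V `*` setT); split => //; try by apply: openX' => //; exact: openT.
apply/seteqP; split => // -[p q] [[[Up _] [Vp _]] [Ap _]].
have : (U `&` V `&` P) p by [].
by rewrite UV.
Qed.

Section Grp.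
Variables (G X : topologicalType) (Gp : topgroupoid G X).
Local Notation rs := (rs_map Gp).
Local Notation r := (rg Gp).
Local Notation s := (sg Gp).
Local Notation m := (mulg Gp).

Lemma rs_cont : continuous rs.
Proof. move=> x; apply: cvg_pair; [exact: rg_cont | exact: sg_cont]. Qed.

Lemma GKL_preim K L : GKL Gp K L = rs @^-1` (L `*` K).
Proof. by []. Qed.

Lemma transl_cont g (A : set G) : (forall h, A h -> r h = s g) ->
  {within A, continuous (m g)}.
Proof.
move=> Ar; apply/subspace_continuousP => h Ah.
have Sgh : s (g, h).1 = r (g, h).2 by rewrite /= Ar.
have mc := (subspace_continuousP _ _).1 (@mulg_cont _ _ Gp) (g, h) Sgh.
rewrite /from_subspace /= in mc *.
move=> W nW; have := mc W nW.
have cp : (fun k => (g, k)) @ nbhs h --> nbhs (g, h).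
  by apply: cvg_pair; [exact: cvg_cst | exact: cvg_id].
move=> H.
have H2 : nbhs (g,h) [set p | s p.1 = r p.2 -> W (m p.1 p.2)] := H.
have := cp _ H2.
move=> H3; have H4 : nbhs h [set k | s g = r k -> W (m g k)] := H3.
change (nbhs h [set k | A k -> W (m g k)]); apply: filterS H4 => k Wk Ak; apply: Wk => /=.
by rewrite Ar.
Qed.

Lemma fibre_compact (hx : forall x, compact (GKL Gp [set x] [set x])) y x :
  compact (rs @^-1` [set (y, x)]).
Proof.
have [[g [gy gx]]|ne] := pselect (exists g, r g = y /\ s g = x); last first.
  have -> : rs @^-1` [set (y, x)] = set0.
    apply/seteqP; split => // k; rewrite /rs_map /= => -[ky kx].
    by apply: ne; exists k.
  exact: compact0.
have -> : rs @^-1` [set (y, x)] = m g @` GKL Gp [set x] [set x].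
  apply/seteqP; split.
  - move=> k; rewrite /rs_map /= => -[ky kx].
    have e1 : s (invg Gp g) = r k by rewrite sg_inv gy ky.
    have e2 : s g = r (invg Gp g) by rewrite rg_inv.
    exists (m (invg Gp g) k).
      split; rewrite /=.
        by rewrite rg_mul // rg_inv.
      by rewrite sg_mul.
    by rewrite (@Pilot.Defs.mulgA _ _ Gp) // mul_invr gy -ky mul_ul.
  - move=> _ [h [/= rh sh] <-]; rewrite /rs_map.
    have e : s g = r h by rewrite gx rh.
    by rewrite rg_mul // sg_mul // gy sh.
apply: continuous_compact (hx x).
by apply: transl_cont => h [/= rh _]; rewrite rh gx.
Qed.

End Grp.

Theorem proposition2p10 (G X : topologicalType) (Gp : topgroupoid G X) :
  loc_compact_space X ->
  let P1 := proper_groupoid Gp in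
  let P2 := is_closed_map (rs_map Gp) /\
            (forall x : X, compact (GKL Gp [set x] [set x])) in
  let P3 := forall K L : set X, compact K -> compact L -> compact (GKL Gp K L) in
  let P3' := forall K L : set X, compact_hd K -> compact_hd L ->
               compact (GKL Gp K L) in
  let P4 := forall K : set X, compact K -> compact (GKL Gp K K) in
  let P5 := forall x y : X, exists Kx Ly : set X,
               [/\ nbhs x Kx, compact_hd Kx, nbhs y Ly, compact_hd Ly
                 & compact (GKL Gp Kx Ly)] in
  (P1 <-> P2) /\ (P1 <-> P3) /\ (P1 <-> P3') /\ (P1 <-> P5) /\ (P1 -> P4) /\
  (@hausdorff_space X -> (P4 -> P1)).
Proof.
move=> lc P1 P2 P3 P3' P4 P5.
have h13 : P1 -> P3.
  move=> p K L cK cL; rewrite GKL_preim.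
  exact: proper_preimage p (compact_setX cL cK).
have h33' : P3 -> P3' by move=> p K L [cK _] [cL _]; exact: p.
have h3'5 : P3' -> P5.
  move=> p x y.
  have [Kx [nK hK]] := lc x; have [Ly [nL hL]] := lc y.
  by exists Kx, Ly; split => //; apply: p.
have h51 : P5 -> P1.
  move=> p; split.
  - move=> C clC [y x] clp.
    have [Kx [Ly [nK [cK hK] nL [cL hL] cG]]] := p x y.
    set A := GKL Gp Kx Ly `&` C.
    have cA : compact A := compact_closedI cG clC.
    have cQ : compact (rs_map Gp @` A).
      by apply: continuous_compact cA; apply: continuous_subspaceT; exact: rs_cont.
    have nN : nbhs (y, x) (Ly `*` Kx) by exists (Ly, Kx).
    have [g [_ Cg] <-] : (rs_map Gp @` A) (y, x).
      apply: (hd_closure (hd_prod hL hK) cQ).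
      - by move=> _ [g [[Lg Kg] _] <-].
      - exact: nbhs_singleton nN.
      move=> W nW.
      have nWN : nbhs (y, x) (W `&` (Ly `*` Kx)) by apply: filterI.
      have [_ [[g Cg <-] [Wg [Lg Kg]]]] := clp _ nWN.
      by exists (rs_map Gp g); split => //; exists g.
    by exists g.
  - move=> [y x].
    have [Kx [Ly [nK [cK hK] nL [cL hL] cG]]] := p x y.
    have -> : rs_map Gp @^-1` [set (y, x)] =
              GKL Gp Kx Ly `&` rs_map Gp @^-1` closure [set (y, x)].
      apply/seteqP; split.
      + move=> g /= e; split; last by apply: subset_closure.
        rewrite /GKL /= -/(rs_map Gp g).
        move: e; rewrite /rs_map => -[-> ->].
        by split; apply: nbhs_singleton.
      + move=> g [Gg clg].
        have H := @hd_closure _ (Ly `*` Kx) [set (y,x)] (rs_map Gp g) (hd_prod hL hK) (@compact_set1 _ (y, x)).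
        apply: H; [|exact: Gg|exact: clg].
        move=> _ ->; split; exact: nbhs_singleton.
    apply: compact_closedI cG _.
    apply: (continuous_closedP _).1; first exact: rs_cont.
    exact: closed_closure.
have h12 : P1 -> P2.
  move=> [cl fib]; split => // x.
  have -> : GKL Gp [set x] [set x] = rs_map Gp @^-1` [set (x, x)].
    apply/seteqP; split; first by move=> g [/= rx sx]; rewrite /rs_map /= rx sx.
    by move=> g; rewrite /rs_map /= => -[rx sx].
  exact: fib.
have h21 : P2 -> P1.
  by move=> [cl hx]; split => // -[y x]; exact: fibre_compact.
split; first by split.
split; first by split => [|q]; [exact: h13 | exact: h51 (h3'5 (h33' q))].
split; first by split => [q|q]; [exact: h33' (h13 q) | exact: h51 (h3'5 q)].
split; first by split => [q|q]; [exact: h3'5 (h33' (h13 q)) | exact: h51 q].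
split; first by move=> q K cK; exact: (h13 q).
move=> hX p4; apply: h51; apply: h3'5; apply: h33'.
move=> K L cK cL.
have cU := compactU cK cL.
have -> : GKL Gp K L = GKL Gp (K `|` L) (K `|` L) `&`
                      (rg Gp @^-1` L `&` sg Gp @^-1` K).
  apply/seteqP; split; first by move=> g [Lg Kg]; split; split => //; [right|left].
  by move=> g [_ [Lg Kg]].
apply: compact_closedI (p4 _ cU) _.
apply: closedI; apply: (continuous_closedP _).1.
- exact: rg_cont.
- exact: compact_closed hX cL.
- exact: sg_cont.
- exact: compact_closed hX cK.
Qed.
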